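(* Let $X$ be a doubling metric space with $C_0$-bounded turning. There is an integer $M$, depending only on the doubling constant and $C_0$, such that for every $r>0$ and every pair $x,x'\in X$ with $d(x,x')=8r$ there is a sequence $x=x_0,x_1,\dots,x_N=x'$ with $N\le M$ of points in $B(x,C_0d(x,x'))$ such that $d(x_0,x_1)=2r/3$ and $$d(x_j,x_{j+1})\le d(x_{j-1},x_j)-\frac{r}{3M}\quad(1\le j\le N-1),$$ with equality whenever $j<N-1$.
   Context: $X$ has $C_0$-bounded turning if any two points $x_1,x_2$ lie in a continuum of diameter at most $C_0d(x_1,x_2)$. Doubling: there is $N_0$ such that for every ball $B(x,s)$, every $s/2$-separated subset of $B(x,s)$ has at most $N_0$ points. *)

(* Defs.v *)
From Stdlib Require Import Reals List.
Open Scope R_scope.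

Definition is_metric {X : Type} (d : X -> X -> R) : Prop :=
  (forall x y, 0 <= d x y) /\
  (forall x y, d x y = 0 <-> x = y) /\
  (forall x y, d x y = d y x) /\
  (forall x y z, d x z <= d x y + d y z).

(* Sequential compactness of a subset K (equivalent to compactness in metric spaces). *)
Definition compact_set {X : Type} (d : X -> X -> R) (K : X -> Prop) : Prop :=
  forall u : nat -> X, (forall n, K (u n)) ->
    exists (phi : nat -> nat) (l : X),
      (forall n, (phi n < phi (S n))%nat) /\ K l /\
      (forall eps, 0 < eps -> exists n0, forall n, (n0 <= n)%nat -> d (u (phi n)) l < eps).

Definition rel_open {X : Type} (d : X -> X -> R) (K U : X -> Prop) : Prop :=
  forall x, K x -> U x -> exists eps, 0 < eps /\ forall y, K y -> d x y < eps -> U y.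

Definition connected_set {X : Type} (d : X -> X -> R) (K : X -> Prop) : Prop :=
  ~ exists U V : X -> Prop,
      rel_open d K U /\ rel_open d K V /\
      (forall x, K x -> U x \/ V x) /\
      (forall x, K x -> U x -> V x -> False) /\
      (exists x, K x /\ U x) /\ (exists x, K x /\ V x).

Definition continuum {X : Type} (d : X -> X -> R) (K : X -> Prop) : Prop :=
  (exists x, K x) /\ compact_set d K /\ connected_set d K.

Definition bounded_turning {X : Type} (d : X -> X -> R) (C0 : R) : Prop :=
  forall x1 x2, exists K : X -> Prop,
    continuum d K /\ K x1 /\ K x2 /\
    (forall y z, K y -> K z -> d y z <= C0 * d x1 x2).

Definition doubling {X : Type} (d : X -> X -> R) (N0 : nat) : Prop :=
  forall (x : X) (s : R) (l : list X), 0 < s ->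
    NoDup l ->
    (forall y, In y l -> d x y < s) ->
    (forall y z, In y l -> In z l -> y <> z -> s / 2 <= d y z) ->
    (length l <= N0)%nat.

(* Main.v *)
Require Import Defs.
From Stdlib Require Import Reals List Lia Lra Classical IndefiniteDescription.
Open Scope R_scope.

Inductive reach {X : Type} (d : X -> X -> R) (eps : R) (P : X -> Prop) (a : X) : X -> Prop :=
| reach_refl : P a -> reach d eps P a a
| reach_step : forall b c, reach d eps P a b -> P c -> d b c < eps -> reach d eps P a c.

Lemma reach_end {X} (d : X -> X -> R) eps P a b : reach d eps P a b -> P b.
Proof. induction 1; auto. Qed.

Lemma reach_mono {X} (d : X -> X -> R) eps (P Q : X -> Prop) a b :
  (forall z, P z -> Q z) -> reach d eps P a b -> reach d eps Q a b.
Proof. intros H; induction 1. apply reach_refl; auto. eapply reach_step; eauto. Qed.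

Lemma conn_reach {X} (d : X -> X -> R) K eps a b : is_metric d -> connected_set d K ->
  0 < eps -> K a -> K b -> reach d eps K a b.
Proof.
  intros [H0 [H1 [Hs Ht]]] Hc He Ka Kb.
  apply NNPP; intro Hn. apply Hc.
  exists (fun q => reach d eps K a q), (fun q => ~ reach d eps K a q).
  split; [|split; [|split; [|split; [|split]]]].
  - intros z Kz Rz. exists eps; split; auto. intros y Ky Hy. eapply reach_step; eauto.
  - intros z Kz Rz. exists eps; split; auto. intros y Ky Hy Ry. apply Rz.
    eapply reach_step; eauto. rewrite Hs; auto.
  - intros z _. apply classic.
  - intros z _ A B; auto.
  - exists a; split; auto. apply reach_refl; auto.
  - exists b; split; auto.
Qed.

Lemma step_gen {X} (d : X -> X -> R) eps (P : X -> Prop) p s x' :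
  is_metric d -> P x' -> s <= d p x' ->
  forall z, reach d eps P x' z ->
   reach d eps (fun q => P q /\ s <= d p q) x' z \/
   exists t, reach d eps (fun q => P q /\ s <= d p q) x' t /\ s <= d p t < s + eps.
Proof.
  intros [H0 [H1 [Hs Ht]]] Px Hx. induction 1.
  - left. apply reach_refl. auto.
  - destruct IHreach as [IH|IH]; [|right; exact IH].
    destruct (Rle_lt_dec s (d p c)) as [Hc|Hc].
    + left. eapply reach_step; eauto.
    + right. exists b. split; auto.
      destruct (reach_end _ _ _ _ _ IH) as [_ Hb]. split; auto.
      specialize (Ht p c b). rewrite (Hs c b) in Ht. lra.
Qed.

Lemma step_lemma {X} (d : X -> X -> R) eps (P : X -> Prop) p s x' :
  is_metric d -> 0 < s -> s <= d p x' -> reach d eps P x' p ->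
   exists t, reach d eps (fun q => P q /\ s <= d p q) x' t /\ s <= d p t < s + eps.
Proof.
  intros Hm Hs Hx Hr.
  assert (Px : P x').
  { clear -Hr. induction Hr; auto. }
  destruct (step_gen d eps P p s x' Hm Px Hx p Hr) as [H|H]; auto.
  apply reach_end in H. destruct H as [_ H].
  destruct Hm as [_ [H1 _]]. rewrite (proj2 (H1 p p) eq_refl) in H. lra.
Qed.

Lemma max_sep {X} (d : X -> X -> R) rho : is_metric d -> 0 < rho -> forall l : list X,
  exists g, incl g l /\ NoDup g /\
   (forall a b, In a g -> In b g -> a <> b -> rho <= d a b) /\
   (forall z, In z l -> exists a, In a g /\ d a z < rho).
Proof.
  intros [H0 [H1 [Hs Ht]]] Hr. induction l as [|z l IH].
  - exists nil. split; [intros ? []|split; [constructor|split]].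
    intros a b []. intros z [].
  - destruct IH as [g [Hi [Hn [Hsep Hc]]]].
    destruct (classic (exists a, In a g /\ d a z < rho)) as [[a [Ha Hd]]|Hno].
    + exists g. split; [|split; [|split]].
      * intros y Hy. right; auto.
      * auto.
      * auto.
      * intros y [<-|Hy]; eauto.
    + assert (Hz : forall a, In a g -> rho <= d a z).
      { intros a Ha. apply Rnot_lt_le. intro. apply Hno; eauto. }
      exists (z :: g). split; [|split; [|split]].
      * intros y [<-|Hy]; [left; auto|right; auto].
      * constructor; [intro Hin; specialize (Hz z Hin);
        rewrite (proj2 (H1 z z) eq_refl) in Hz; lra | exact Hn].
      * intros a b [<-|Ha] [<-|Hb] Hab; try congruence.
        -- rewrite Hs. auto.
        -- auto.
        -- auto.
      * intros y [<-|Hy].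
        -- exists z. split; [left; auto|]. rewrite (proj2 (H1 z z) eq_refl). auto.
        -- destruct (Hc y Hy) as [a [Ha Hd]]. exists a; split; auto. right; auto.
Qed.

Definition rfilt {X} (d : X -> X -> R) (a : X) (rho : R) (l : list X) :=
  filter (fun z => if Rlt_dec (d a z) rho then true else false) l.

Lemma rfilt_In {X} (d : X -> X -> R) a rho l z :
  In z (rfilt d a rho l) <-> In z l /\ d a z < rho.
Proof.
  unfold rfilt. rewrite filter_In. destruct (Rlt_dec (d a z) rho); intuition congruence.
Qed.

Lemma concat_len_bound {A B} (f : A -> list B) (g : list A) (b : nat) :
  (forall a, In a g -> (length (f a) <= b)%nat) ->
  (length (concat (map f g)) <= length g * b)%nat.
Proof.
  induction g as [|a g IH]; intros H; simpl; auto.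
  rewrite length_app. specialize (IH (fun a' h => H a' (or_intror h))).
  specialize (H a (or_introl eq_refl)). lia.
Qed.

Lemma dbl_count {X} (d : X -> X -> R) N0 : is_metric d -> doubling d N0 ->
  forall m y s l, 0 < s -> NoDup l -> (forall z, In z l -> d y z < s) ->
  (forall a b, In a l -> In b l -> a <> b -> s / 2 ^ (S m) <= d a b) ->
  (length l <= N0 ^ S m)%nat.
Proof.
  intros Hm Hd. induction m as [|m IH]; intros y s l Hs Hn Hb Hsep.
  - simpl. rewrite Nat.mul_1_r. apply (Hd y s l Hs Hn Hb).
    intros a b Ha Hb' Hab. specialize (Hsep a b Ha Hb' Hab). simpl in Hsep.
    replace (s / (2 * 1)) with (s / 2) in Hsep by field. auto.
  - destruct (max_sep d (s/2) Hm ltac:(lra) l) as [g [Hi [Hgn [Hgs Hgc]]]].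
    assert (Hg : (length g <= N0)%nat).
    { apply (Hd y s g Hs Hgn). intros z Hz; apply Hb, Hi, Hz. exact Hgs. }
    assert (Hc : forall a, In a g -> (length (rfilt d a (s/2) l) <= N0 ^ S m)%nat).
    { intros a Ha. apply (IH a (s/2)). lra.
      apply NoDup_filter; auto.
      intros z Hz; apply rfilt_In in Hz; tauto.
      intros u v Hu Hv Huv. apply rfilt_In in Hu. apply rfilt_In in Hv.
      specialize (Hsep u v (proj1 Hu) (proj1 Hv) Huv).
      replace (s / 2 / 2 ^ S m) with (s / 2 ^ S (S m)); auto.
      simpl. field. apply pow_nonzero. lra. }
    assert (Hl : (length l <= length (concat (map (fun a => rfilt d a (s/2) l) g)))%nat).
    { apply NoDup_incl_length; auto. intros z Hz.
      destruct (Hgc z Hz) as [a [Ha Hda]]. apply in_concat.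
      exists (rfilt d a (s/2) l). split. apply in_map_iff; exists a; split; auto. apply rfilt_In; auto. }
    pose proof (concat_len_bound (fun a => rfilt d a (s/2) l) g _ Hc).
    change (N0 ^ S (S m))%nat with (N0 * N0 ^ S m)%nat.
    eapply Nat.le_trans; [exact Hl|]. eapply Nat.le_trans; [exact H|].
    apply Nat.mul_le_mono_r. auto.
Qed.

Definition infinite (I : nat -> Prop) := forall n, exists m, (n <= m)%nat /\ I m.

Definition conv_along {X} (d : X -> X -> R) (I : nat -> Prop) (u : nat -> X) (l : X) :=
  forall eps, 0 < eps -> exists n0, forall n, (n0 <= n)%nat -> I n -> d (u n) l < eps.

Lemma strict_mono (f : nat -> nat) : (forall n, (f n < f (S n))%nat) ->
  forall a b, (a < b)%nat -> (f a < f b)%nat.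
Proof.
  intros H a b Hab. induction Hab. apply H. specialize (H m). lia.
Qed.

Lemma strict_mono_ge (f : nat -> nat) : (forall n, (f n < f (S n))%nat) ->
  forall n, (n <= f n)%nat.
Proof. intros H n. induction n. lia. specialize (H n). lia. Qed.

Lemma sub_conv {X} (d : X -> X -> R) (K : X -> Prop) (I : nat -> Prop) (u : nat -> X) :
  compact_set d K -> infinite I -> (forall n, I n -> K (u n)) ->
  exists l J, K l /\ infinite J /\ (forall n, J n -> I n) /\ conv_along d J u l.
Proof.
  intros Hc Hi Hu.
  pose (nxt := fun n => proj1_sig (constructive_indefinite_description _ (Hi n))).
  assert (Hnxt : forall n, (n <= nxt n)%nat /\ I (nxt n)).
  { intro n. unfold nxt. destruct (constructive_indefinite_description _ (Hi n)); auto. }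
  pose (e := fix e k := match k with O => nxt O | S k => nxt (S (e k)) end).
  assert (He : forall k, (e k < e (S k))%nat).
  { intro k. simpl. specialize (Hnxt (S (e k))). lia. }
  assert (HeI : forall k, I (e k)).
  { intros [|k]; simpl; apply Hnxt. }
  destruct (Hc (fun k => u (e k)) (fun k => Hu _ (HeI k))) as [phi [l [Hphi [Kl Hconv]]]].
  exists l, (fun n => exists k, n = e (phi k)). split; [auto|split; [|split]].
  - intro n. exists (e (phi n)). split; [|exists n; auto].
    pose proof (strict_mono_ge _ He (phi n)). pose proof (strict_mono_ge _ Hphi n). lia.
  - intros n [k ->]. auto.
  - intros eps Heps. destruct (Hconv eps Heps) as [n0 Hn0].
    exists (e (phi n0)). intros n Hn [k ->].
    apply Hn0. destruct (Nat.le_gt_cases n0 k) as [|Hk]; auto.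
    pose proof (strict_mono _ Hphi _ _ Hk). pose proof (strict_mono _ He _ _ H). lia.
Qed.

Lemma tuple_conv {X} (d : X -> X -> R) (K : X -> Prop) : compact_set d K ->
  forall m (I : nat -> Prop) (q : nat -> nat -> X), infinite I ->
  (forall n j, I n -> (j < m)%nat -> K (q n j)) ->
  exists (l : nat -> X) J, (forall j, (j < m)%nat -> K (l j)) /\ infinite J /\
    (forall n, J n -> I n) /\ forall j, (j < m)%nat -> conv_along d J (fun n => q n j) (l j).
Proof.
  intros Hc m. induction m as [|m IH]; intros I q Hi Hq.
  - exists (q O), I. repeat split; auto; intros; lia.
  - destruct (IH I q Hi (fun n j h hj => Hq n j h ltac:(lia))) as [l [J [Kl [HJ [HJI Hconv]]]]].
    destruct (sub_conv d K J (fun n => q n m) Hc HJ (fun n h => Hq n m (HJI n h) ltac:(lia)))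
      as [lm [J' [Klm [HJ' [HJJ Hcm]]]]].
    exists (fun j => if Nat.eqb j m then lm else l j), J'.
    split; [|split; [auto|split]].
    + intros j Hj. destruct (Nat.eqb_spec j m); auto. apply Kl. lia.
    + intros n h; auto.
    + intros j Hj. destruct (Nat.eqb_spec j m) as [->|Hne]; auto.
      intros eps Heps. destruct (Hconv j ltac:(lia) eps Heps) as [n0 Hn0].
      exists n0. intros n Hn h. apply Hn0; auto.
Qed.

Lemma pigeon (B : nat) : forall f : nat -> nat, (forall n, (f n <= B)%nat) ->
  exists v, infinite (fun n => f n = v).
Proof.
  induction B as [|B IH]; intros f Hf.
  - exists O. intro n. exists n. split; auto. specialize (Hf n). lia.
  - destruct (classic (infinite (fun n => f n = S B))) as [H|H]; [eauto|].
    unfold infinite in H. apply not_all_ex_not in H. destruct H as [n0 Hn0].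
    assert (Hn : forall m, (n0 <= m)%nat -> f m <> S B).
    { intros m Hm Heq. apply Hn0. eauto. }
    destruct (IH (fun m => f (m + n0)%nat)) as [v Hv].
    { intro m. specialize (Hf (m + n0)%nat). specialize (Hn (m + n0)%nat ltac:(lia)). lia. }
    exists v. intro n. destruct (Hv n) as [m [Hm Hfm]]. exists (m + n0)%nat. split; auto. lia.
Qed.

Lemma metric_eq {X} (d : X -> X -> R) a b : is_metric d ->
  (forall eps, 0 < eps -> d a b < eps) -> a = b.
Proof.
  intros [H0 [H1 _]] H. apply H1. destruct (Rle_lt_or_eq_dec 0 (d a b) (H0 a b)) as [h|h]; auto.
  specialize (H _ h). lra.
Qed.

Lemma real_le_eps (y T : R) : (forall eps, 0 < eps -> y < T + eps) -> y <= T.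
Proof.
  intros H. apply Rnot_lt_le. intro h. specialize (H ((y - T)/2) ltac:(lra)). lra.
Qed.

Lemma real_eq_eps (y T : R) : (forall eps, 0 < eps -> T - eps < y < T + eps) -> y = T.
Proof.
  intros H. apply Rle_antisym. apply real_le_eps. intros; apply H; auto.
  apply Rnot_lt_le. intro h. specialize (H ((T - y)/2) ltac:(lra)). lra.
Qed.

Definition tt (r : R) (M : nat) (j : nat) := 2 * r / 3 - INR j * (r / (3 * INR M)).

Lemma tt_ge (r : R) (M j : nat) : 0 < r -> (0 < M)%nat -> (j <= M)%nat -> r / 3 <= tt r M j.
Proof.
  intros Hr HM Hj. unfold tt. apply le_INR in Hj. apply lt_INR in HM. simpl in HM.
  assert (INR j * (r / (3 * INR M)) <= INR M * (r / (3 * INR M))).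
  { apply Rmult_le_compat_r; auto. apply Rlt_le. apply Rdiv_lt_0_compat; lra. }
  replace (INR M * (r / (3 * INR M))) with (r/3) in H by (field; lra). lra.
Qed.

Lemma tt_S (r : R) (M j : nat) : tt r M (S j) = tt r M j - r / (3 * INR M).
Proof. unfold tt. rewrite S_INR. ring. Qed.

Definition Approx {X} (d : X -> X -> R) (K : X -> Prop) (x x' : X) r M eps N (p : nat -> X) :=
  p O = x /\ p N = x' /\ (forall j, (j <= N)%nat -> K (p j)) /\ (2 <= N)%nat /\ (N <= M)%nat /\
  (forall j, (S j < N)%nat -> tt r M j <= d (p j) (p (S j)) < tt r M j + eps) /\
  d (p (N - 1)%nat) (p N) <= tt r M (N - 1).

Definition Rg {X} (d : X -> X -> R) (K : X -> Prop) r M k (p : nat -> X) (q : X) :=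
  K q /\ forall j, (j < k)%nat -> tt r M j <= d (p j) q.

Definition Inv {X} (d : X -> X -> R) (K : X -> Prop) (x x' : X) r M eps k (p : nat -> X) :=
  p O = x /\ (forall j, (j <= k)%nat -> K (p j)) /\
  (forall j, (S j <= k)%nat -> tt r M j <= d (p j) (p (S j)) < tt r M j + eps) /\
  (forall l j, (l <= k)%nat -> (j < l)%nat -> tt r M j <= d (p j) (p l)) /\
  reach d eps (Rg d K r M k p) x' (p k).

Lemma construct {X} (d : X -> X -> R) (K : X -> Prop) (x x' : X) r M eps L :
  is_metric d -> connected_set d K -> K x -> K x' -> d x x' = 8 * r -> 0 < r -> 0 < eps ->
  (L < M)%nat ->
  forall k, (k <= L)%nat -> (exists N p, Approx d K x x' r M eps N p) \/
                           (exists p, Inv d K x x' r M eps k p).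
Proof.
  intros Hm Hc Kx Kx' Hxx Hr He HL k. induction k as [|k IH]; intros Hk.
  - right. exists (fun _ => x). split; [auto|split; [|split; [|split]]].
    + intros; auto.
    + intros; lia.
    + intros; lia.
    + apply (reach_mono _ _ K). intros z Kz. split; auto. intros; lia.
      apply conn_reach; auto.
  - destruct (IH ltac:(lia)) as [H|[p [H0 [HK [Hst [Hsep Hre]]]]]]; [left; exact H|].
    destruct (Rle_lt_dec (d (p k) x') (tt r M k)) as [Hstop|Hgo].
    + left. exists (S k), (fun j => if Nat.eqb j (S k) then x' else p j).
      assert (k <> O).
      { intros ->. rewrite H0, Hxx in Hstop. unfold tt in Hstop. simpl in Hstop. lra. }
      split; [|split; [|split; [|split; [|split; [|split]]]]].
      * simpl. auto.
      * rewrite Nat.eqb_refl. auto.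
      * intros j Hj. destruct (Nat.eqb_spec j (S k)); auto. apply HK; lia.
      * lia.
      * lia.
      * intros j Hj. destruct (Nat.eqb_spec j (S k)); [lia|].
        destruct (Nat.eqb_spec (S j) (S k)); [lia|]. apply Hst; lia.
      * rewrite Nat.eqb_refl. replace (S k - 1)%nat with k by lia.
        destruct (Nat.eqb_spec k (S k)); [lia|]. auto.
    + assert (Htk : 0 < tt r M k).
      { pose proof (tt_ge r M k Hr ltac:(lia) ltac:(lia)). lra. }
      destruct (step_lemma d eps _ (p k) (tt r M k) x' Hm Htk (Rlt_le _ _ Hgo) Hre)
        as [q [Hq Hdq]].
      right. exists (fun j => if Nat.eqb j (S k) then q else p j).
      pose proof (reach_end _ _ _ _ _ Hq) as [[Kq Hqs] Hqk].
      split; [|split; [|split; [|split]]].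
      * simpl. auto.
      * intros j Hj. destruct (Nat.eqb_spec j (S k)); auto. apply HK; lia.
      * intros j Hj. destruct (Nat.eqb_spec j (S k)); [lia|].
        destruct (Nat.eqb_spec (S j) (S k)) as [e|].
        -- injection e as ->. auto.
        -- apply Hst; lia.
      * intros l j Hl Hj. destruct (Nat.eqb_spec j (S k)); [lia|].
        destruct (Nat.eqb_spec l (S k)) as [->|].
        -- destruct (Nat.eqb_spec j k) as [->|]; auto. apply Hqs; lia.
        -- apply Hsep; lia.
      * rewrite Nat.eqb_refl. revert Hq. apply reach_mono.
        intros z [[Kz Hz] Hzk]. split; auto. intros j Hj.
        destruct (Nat.eqb_spec j (S k)); [lia|].
        destruct (Nat.eqb_spec j k) as [->|]; auto. apply Hz; lia.
Qed.

Lemma approx_exists {X} (d : X -> X -> R) (K : X -> Prop) (x x' : X) N0 C0 m r eps :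
  is_metric d -> doubling d N0 -> connected_set d K -> K x -> K x' ->
  (forall y z, K y -> K z -> d y z <= C0 * d x x') ->
  d x x' = 8 * r -> 0 < r -> 0 < eps -> 27 * C0 <= 2 ^ S m ->
  exists N p, Approx d K x x' r (S (N0 ^ S m)) eps N p.
Proof.
  intros Hm Hd Hc Kx Kx' Hdiam Hxx Hr He Hpow.
  set (L := (N0 ^ S m)%nat).
  destruct (construct d K x x' r (S L) eps L Hm Hc Kx Kx' Hxx Hr He ltac:(lia) L ltac:(lia))
    as [H|[p [H0 [HK [Hst [Hsep Hre]]]]]]; [exact H|].
  exfalso.
  assert (HC0 : 1 <= C0).
  { specialize (Hdiam x x' Kx Kx'). rewrite Hxx in Hdiam. nra. }
  destruct Hm as [Hm0 [Hm1 [Hms Hmt]]].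
  assert (Hsepr : forall i j, (i <= L)%nat -> (j <= L)%nat -> i <> j -> r / 3 <= d (p i) (p j)).
  { intros i j Hi Hj Hij. destruct (proj1 (Nat.lt_gt_cases i j) Hij) as [h|h].
    - pose proof (tt_ge r (S L) i Hr ltac:(lia) ltac:(lia)). pose proof (Hsep j i Hj h). lra.
    - pose proof (tt_ge r (S L) j Hr ltac:(lia) ltac:(lia)). pose proof (Hsep i j Hi h).
      rewrite Hms. lra. }
  assert (Hlen : (length (map p (seq 0 (S L))) <= N0 ^ S m)%nat).
  { apply (dbl_count d N0 (conj Hm0 (conj Hm1 (conj Hms Hmt))) Hd m x (9 * C0 * r)).
    - nra.
    - apply NoDup_map_NoDup_ForallPairs; [|apply seq_NoDup].
      intros i j Hi Hj Heq. apply in_seq in Hi. apply in_seq in Hj.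
      destruct (Nat.eq_dec i j) as [|Hne]; auto. exfalso.
      pose proof (Hsepr i j ltac:(lia) ltac:(lia) Hne). rewrite Heq in H.
      rewrite (proj2 (Hm1 (p j) (p j)) eq_refl) in H. lra.
    - intros z Hz. apply in_map_iff in Hz. destruct Hz as [j [<- Hj]]. apply in_seq in Hj.
      pose proof (Hdiam x (p j) Kx (HK j ltac:(lia))). rewrite Hxx in H. nra.
    - intros a b Ha Hb Hab. apply in_map_iff in Ha. destruct Ha as [i [<- Hi]].
      apply in_map_iff in Hb. destruct Hb as [j [<- Hj]]. apply in_seq in Hi. apply in_seq in Hj.
      assert (i <> j) by (intros ->; auto).
      pose proof (Hsepr i j ltac:(lia) ltac:(lia) H).
      assert (0 < 2 ^ S m) by (apply pow_lt; lra).
      apply Rle_trans with (r/3); auto.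
      apply Rmult_le_reg_r with (2 ^ S m); auto. unfold Rdiv. rewrite Rmult_assoc, Rinv_l by lra.
      nra. }
  rewrite length_map, length_seq in Hlen. unfold L in Hlen. lia.
Qed.

Lemma Rabs_le_between (y b : R) : Rabs y <= b -> -b <= y <= b.
Proof. intros H. pose proof (Rle_abs y). pose proof (Rle_abs (-y)). rewrite Rabs_Ropp in H1. split; lra. Qed.

Lemma nat_big (A : R) : exists n : nat, A < INR n.
Proof. destruct (INR_archimed 1 A ltac:(lra)) as [n Hn]. exists n. lra. Qed.

Lemma pow2_ge (n : nat) : INR n <= 2 ^ n.
Proof.
  induction n. simpl; lra. rewrite S_INR. simpl.
  assert (1 <= 2 ^ n) by (apply pow_R1_Rle; lra). lra.
Qed.

Lemma pow2_big (y : R) : exists m : nat, y <= 2 ^ S m.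
Proof.
  destruct (nat_big y) as [n Hn]. exists n. pose proof (pow2_ge (S n)).
  rewrite S_INR in H. lra.
Qed.

Lemma close2 {X} (d : X -> X -> R) (J : nat -> Prop) (u v : nat -> X) a b :
  infinite J -> conv_along d J u a -> conv_along d J v b ->
  forall eps, 0 < eps -> exists n, J n /\ d (u n) a < eps /\ d (v n) b < eps /\
     1 / (INR n + 1) < eps.
Proof.
  intros HJ Hu Hv eps He.
  destruct (Hu eps He) as [n0 H0]. destruct (Hv eps He) as [n1 H1].
  destruct (nat_big (1/eps)) as [n2 H2].
  destruct (HJ (Nat.max n0 (Nat.max n1 n2))) as [n [Hn Jn]].
  exists n. split; auto. split; [apply H0; auto; lia|]. split; [apply H1; auto; lia|].
  assert (INR n2 <= INR n) by (apply le_INR; lia).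
  pose proof (pos_INR n2).
  apply Rmult_lt_reg_r with (INR n + 1); [lra|].
  unfold Rdiv. rewrite Rmult_1_l, Rinv_l by lra.
  apply Rmult_lt_reg_r with (/ eps). apply Rinv_0_lt_compat; auto.
  rewrite Rmult_1_l. replace (eps * (INR n + 1) * / eps) with (INR n + 1) by (field; lra).
  unfold Rdiv in H2. lra.
Qed.

Theorem mainTheorem14 :
  forall (N0 : nat) (C0 : R),
  exists M : nat, (0 < M)%nat /\
  forall (X : Type) (d : X -> X -> R),
    is_metric d -> doubling d N0 -> bounded_turning d C0 ->
    forall (r : R) (x x' : X), 0 < r -> d x x' = 8 * r ->
    exists (N : nat) (p : nat -> X),
      (N <= M)%nat /\ p 0%nat = x /\ p N = x' /\
      (forall j, (j <= N)%nat -> d x (p j) <= C0 * d x x') /\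
      d (p 0%nat) (p 1%nat) = 2 * r / 3 /\
      (forall j, (1 <= j)%nat -> (j <= N - 1)%nat ->
         d (p j) (p (S j)) <= d (p (j - 1)%nat) (p j) - r / (3 * INR M)) /\
      (forall j, (1 <= j)%nat -> (j < N - 1)%nat ->
         d (p j) (p (S j)) = d (p (j - 1)%nat) (p j) - r / (3 * INR M)).
Proof.
  intros N0 C0. destruct (pow2_big (27 * C0)) as [m Hpow].
  exists (S (N0 ^ S m)). split; [lia|].
  set (M := S (N0 ^ S m)).
  intros X d Hm Hd Hbt r x x' Hr Hxx.
  destruct (Hbt x x') as [K [[_ [Hcomp Hconn]] [Kx [Kx' Hdiam]]]].
  assert (Hap : forall n : nat, exists N p, Approx d K x x' r M (1 / (INR n + 1)) N p).
  { intro n. apply (approx_exists d K x x' N0 C0 m r); auto.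
    pose proof (pos_INR n). apply Rdiv_lt_0_compat; lra. }
  pose (Nf := fun n => proj1_sig (constructive_indefinite_description _ (Hap n))).
  assert (HNf : forall n, exists p, Approx d K x x' r M (1 / (INR n + 1)) (Nf n) p).
  { intro n. unfold Nf. destruct (constructive_indefinite_description _ (Hap n)); auto. }
  pose (pf := fun n => proj1_sig (constructive_indefinite_description _ (HNf n))).
  assert (Hpf : forall n, Approx d K x x' r M (1 / (INR n + 1)) (Nf n) (pf n)).
  { intro n. unfold pf. destruct (constructive_indefinite_description _ (HNf n)); auto. }
  clearbody Nf pf.
  destruct (pigeon M Nf) as [v Hv].
  { intro n. destruct (Hpf n) as [_ [_ [_ [_ [h _]]]]]. exact h. }
  destruct (tuple_conv d K Hcomp (S v) (fun n => Nf n = v) pf Hv) as [l [J [Kl [HJ [HJI Hconv]]]]].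
  { intros n j Hn Hj. destruct (Hpf n) as [_ [_ [HK _]]]. apply HK. lia. }
  destruct (HJ O) as [n00 [_ Jn00]].
  destruct (Hpf n00) as [_ [_ [_ [Hv2 [HvM _]]]]]. rewrite (HJI _ Jn00) in Hv2, HvM.
  assert (Hl0 : l O = x).
  { symmetry. apply (metric_eq d); auto. intros eps He.
    destruct (close2 d J (fun n => pf n O) (fun n => pf n O) (l O) (l O) HJ
       (Hconv O ltac:(lia)) (Hconv O ltac:(lia)) eps He) as [n [Jn [h _]]].
    destruct (Hpf n) as [H0 _]. simpl in h. rewrite H0 in h. exact h. }
  assert (Hlv : l v = x').
  { symmetry. apply (metric_eq d); auto. intros eps He.
    destruct (close2 d J (fun n => pf n v) (fun n => pf n v) (l v) (l v) HJ
       (Hconv v ltac:(lia)) (Hconv v ltac:(lia)) eps He) as [n [Jn [h _]]].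
    destruct (Hpf n) as [_ [H1 _]]. simpl in h. rewrite (HJI _ Jn) in H1. rewrite H1 in h.
    exact h. }
  destruct Hm as [Hm0 [Hm1 [Hs Ht]]].
  assert (Hdist : forall a b a' b', Rabs (d a b - d a' b') <= d a a' + d b b').
  { intros a b a' b'. apply Rabs_le. pose proof (Ht a a' b). pose proof (Ht a' b' b).
    pose proof (Ht a' a b'). pose proof (Ht a b b'). rewrite (Hs a' a) in *.
    rewrite (Hs b' b) in *. split; lra. }
  assert (Hexact : forall j, (S j < v)%nat -> d (l j) (l (S j)) = tt r M j).
  { intros j Hj. apply real_eq_eps. intros eps He.
    destruct (close2 d J (fun n => pf n j) (fun n => pf n (S j)) (l j) (l (S j)) HJ
       (Hconv j ltac:(lia)) (Hconv (S j) ltac:(lia)) (eps/3) ltac:(lra)) as [n [Jn [h1 [h2 h3]]]].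
    destruct (Hpf n) as [_ [_ [_ [_ [_ [Hst _]]]]]]. rewrite (HJI _ Jn) in Hst.
    specialize (Hst j Hj). specialize (Hdist (pf n j) (pf n (S j)) (l j) (l (S j))).
    apply Rabs_le_between in Hdist. simpl in h1, h2. lra. }
  assert (Hlast : d (l (v - 1)%nat) (l v) <= tt r M (v - 1)).
  { apply real_le_eps. intros eps He.
    destruct (close2 d J (fun n => pf n (v-1)%nat) (fun n => pf n v) (l (v-1)%nat) (l v) HJ
       (Hconv (v-1)%nat ltac:(lia)) (Hconv v ltac:(lia)) (eps/2) ltac:(lra)) as [n [Jn [h1 [h2 h3]]]].
    destruct (Hpf n) as [_ [_ [_ [_ [_ [_ Hf]]]]]]. rewrite (HJI _ Jn) in Hf.
    specialize (Hdist (pf n (v-1)%nat) (pf n v) (l (v-1)%nat) (l v)).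
    apply Rabs_le_between in Hdist. simpl in h1, h2. lra. }
  exists v, l. split; [auto|split; [auto|split; [auto|split; [|split; [|split]]]]].
  - intros j Hj. rewrite <- Hl0 at 1. apply Hdiam; auto. rewrite Hl0; auto. apply Kl; lia.
  - rewrite Hexact by lia. unfold tt. simpl. ring.
  - intros j H1 H2.
    assert (Hp : d (l (j - 1)%nat) (l j) = tt r M (j - 1)).
    { pose proof (Hexact (j-1)%nat ltac:(lia)) as h. replace (S (j - 1)) with j in h by lia. exact h. }
    assert (Ht' : tt r M j = tt r M (j - 1) - r / (3 * INR M)).
    { rewrite <- tt_S. f_equal. lia. }
    rewrite Hp, <- Ht'.
    destruct (Nat.eq_dec j (v - 1)) as [->|Hne].
    + replace (S (v - 1)) with v by lia. auto.
    + rewrite Hexact by lia. lra.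
  - intros j H1 H2.
    assert (Hp : d (l (j - 1)%nat) (l j) = tt r M (j - 1)).
    { pose proof (Hexact (j-1)%nat ltac:(lia)) as h. replace (S (j - 1)) with j in h by lia. exact h. }
    assert (Ht' : tt r M j = tt r M (j - 1) - r / (3 * INR M)).
    { rewrite <- tt_S. f_equal. lia. }
    rewrite Hp, <- Ht'. apply Hexact. lia.
Qed.
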